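(* Let $\Phi_1,\Phi_2,\Phi_3,\Psi_1,\Psi_2,\Psi_3:\mathbb{Z}^3\to\mathbb{Q}$ be the functions defined in the context. Then for all integers $a,b,c$ and each $i\in\{1,2,3\}$, \[ \Phi_i(a,b,c)\,\Phi_i(a-3,b-3,c-2)=\Phi_i(a-2,b-1,c)\,\Phi_i(a-1,b-2,c-2)+\Phi_i(a-1,b-1,c-1)\,\Phi_i(a-2,b-2,c-1) \] and \[ \Psi_i(a,b,c)\,\Psi_i(a-3,b-3,c-2)=\Psi_i(a-2,b-1,c)\,\Psi_i(a-1,b-2,c-2)+\Psi_i(a-1,b-1,c-1)\,\Psi_i(a-2,b-2,c-1). \]
   Context: For integers $a,b,c$ define $g(a,b,c)=(b-a)(b-c)+\left\lfloor\frac{(a-c)^2}{3}\right\rfloor$, $q(a,b,c)=\left\lfloor\frac{(a-b+c)^2}{4}\right\rfloor$, $\alpha(a,b,c)=2$ if $3b+a-c\equiv 1\pmod 6$, $\alpha(a,b,c)=3$ if $3b+a-c\equiv 5\pmod 6$, and $\alpha(a,b,c)=1$ otherwise; $\beta(a,b,c)=3$ if $3b+a-c\equiv 1\pmod 6$, $\beta(a,b,c)=2$ if $3b+a-c\equiv 5\pmod 6$, and $\beta(a,b,c)=1$ otherwise. Writing $g=g(a,b,c)$, $q=q(a,b,c)$ and $r=\lfloor (a-c+1)/3\rfloor$, define (exponents may be negative, so values are rational) $\Phi_1(a,b,c)=\alpha(a,b,c)\,2^{g(a,b,c+1)}5^{g}11^{q}$, $\Phi_2(a,b,c)=\alpha(a,b,c)\,2^{g(a,b,c-1)-r+(a-b)}5^{g}11^{q}$,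 $\Phi_3(a,b,c)=\alpha(a,b,c)\,2^{g(a,b,c-1)-r}5^{g}11^{q}$, $\Psi_1(a,b,c)=\beta(a,b,c)\,2^{g(a,b,c-1)}5^{g}11^{q}$, $\Psi_2(a,b,c)=\beta(a,b,c)\,2^{g(a,b,c+1)+r-(a-b)}5^{g}11^{q}$, $\Psi_3(a,b,c)=\beta(a,b,c)\,2^{g(a,b,c+1)+r}5^{g}11^{q}$. *)

(* Defs.v *)
From mathcomp Require Import all_boot all_order all_algebra.
Set Implicit Arguments. Unset Strict Implicit. Unset Printing Implicit Defensive.
Import Order.TTheory GRing.Theory Num.Theory.
Local Open Scope ring_scope.

(* Integer floor division: for d > 0, (m %/ d)%Z is the floor of m/d
   (intdiv's remainder (m %% d)%Z is in [0, d)). *)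

Definition g (a b c : int) : int :=
  (b - a) * (b - c) + ((a - c) ^+ 2 %/ 3)%Z.

Definition q (a b c : int) : int := ((a - b + c) ^+ 2 %/ 4)%Z.

Definition alpha (a b c : int) : rat :=
  let m := ((3 * b + a - c) %% 6)%Z in
  if m == 1 then 2%:Q else if m == 5 then 3%:Q else 1%:Q.

Definition beta (a b c : int) : rat :=
  let m := ((3 * b + a - c) %% 6)%Z in
  if m == 1 then 3%:Q else if m == 5 then 2%:Q else 1%:Q.

Definition r (a c : int) : int := ((a - c + 1) %/ 3)%Z.

Definition common (a b c : int) : rat :=
  (5%:Q) ^ (g a b c) * (11%:Q) ^ (q a b c).

Definition Phi1 (a b c : int) : rat :=
  alpha a b c * (2%:Q) ^ (g a b (c + 1)) * common a b c.
Definition Phi2 (a b c : int) : rat :=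
  alpha a b c * (2%:Q) ^ (g a b (c - 1) - r a c + (a - b)) * common a b c.
Definition Phi3 (a b c : int) : rat :=
  alpha a b c * (2%:Q) ^ (g a b (c - 1) - r a c) * common a b c.
Definition Psi1 (a b c : int) : rat :=
  beta a b c * (2%:Q) ^ (g a b (c - 1)) * common a b c.
Definition Psi2 (a b c : int) : rat :=
  beta a b c * (2%:Q) ^ (g a b (c + 1) + r a c - (a - b)) * common a b c.
Definition Psi3 (a b c : int) : rat :=
  beta a b c * (2%:Q) ^ (g a b (c + 1) + r a c) * common a b c.

Definition Phi (i : 'I_3) : int -> int -> int -> rat :=
  match val i with 0%N => Phi1 | 1%N => Phi2 | _ => Phi3 end.
Definition Psi (i : 'I_3) : int -> int -> int -> rat :=
  match val i with 0%N => Psi1 | 1%N => Psi2 | _ => Psi3 end.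

(* Main.v *)
Require Import Defs.
From mathcomp Require Import all_boot all_order all_algebra zify ring.
Import Order.TTheory GRing.Theory Num.Theory.
Local Open Scope ring_scope.

Lemma alpha_eq x y z (n : int) : ((3 * y + x - z) %% 6)%Z = n ->
  alpha x y z = (if n == 1 then 2%:Q else if n == 5 then 3%:Q else 1%:Q).
Proof. by rewrite /alpha => ->. Qed.

Lemma beta_eq x y z (n : int) : ((3 * y + x - z) %% 6)%Z = n ->
  beta x y z = (if n == 1 then 3%:Q else if n == 5 then 2%:Q else 1%:Q).
Proof. by rewrite /beta => ->. Qed.

Lemma T4 (c c' : rat) (e e' gg gg' qq qq' : int) :
  c * 2%:Q ^ e * (5%:Q ^ gg * 11%:Q ^ qq) * (c' * 2%:Q ^ e' * (5%:Q ^ gg' * 11%:Q ^ qq'))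
  = c * c' * (2%:Q ^ (e + e') * 5%:Q ^ (gg + gg') * 11%:Q ^ (qq + qq')).
Proof. rewrite !expfzDr //; ring. Qed.

Lemma key (c1 c2 c3 c4 c5 c6 : rat) (e1 e2 e3 e4 e5 e6 g1 g2 g3 g4 g5 g6
   q1 q2 q3 q4 q5 q6 dA2 dA5 dA11 dB2 dB5 dB11 : int) :
  e3 + e4 - (e1 + e2) = dA2 -> g3 + g4 - (g1 + g2) = dA5 -> q3 + q4 - (q1 + q2) = dA11 ->
  e5 + e6 - (e1 + e2) = dB2 -> g5 + g6 - (g1 + g2) = dB5 -> q5 + q6 - (q1 + q2) = dB11 ->
  c1 * c2 = c3 * c4 * (2%:Q ^ dA2 * 5%:Q ^ dA5 * 11%:Q ^ dA11)
            + c5 * c6 * (2%:Q ^ dB2 * 5%:Q ^ dB5 * 11%:Q ^ dB11) ->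
  c1 * 2%:Q ^ e1 * (5%:Q ^ g1 * 11%:Q ^ q1) * (c2 * 2%:Q ^ e2 * (5%:Q ^ g2 * 11%:Q ^ q2))
  = c3 * 2%:Q ^ e3 * (5%:Q ^ g3 * 11%:Q ^ q3) * (c4 * 2%:Q ^ e4 * (5%:Q ^ g4 * 11%:Q ^ q4))
  + c5 * 2%:Q ^ e5 * (5%:Q ^ g5 * 11%:Q ^ q5) * (c6 * 2%:Q ^ e6 * (5%:Q ^ g6 * 11%:Q ^ q6)).
Proof.
move=> HA2 HA5 HA11 HB2 HB5 HB11 H.
have S: forall x y d : int, x - y = d -> x = y + d by move=> x y d <-; ring.
rewrite !T4 (S _ _ _ HA2) (S _ _ _ HA5) (S _ _ _ HA11) (S _ _ _ HB2) (S _ _ _ HB5) (S _ _ _ HB11).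
rewrite !(expfzDr _ _ (_ : 2%:Q != 0)) // !(expfzDr _ _ (_ : 5%:Q != 0)) //
  !(expfzDr _ _ (_ : 11%:Q != 0)) //.
rewrite H; ring.
Qed.

Ltac solve_d := match goal with |- ?X = _ =>
  first [ (assert (E: X = 0) by lia); exact E
        | (assert (E: X = 1) by lia); exact E
        | (assert (E: X = -1) by lia); exact E
        | (assert (E: X = 2) by lia); exact E
        | (assert (E: X = -2) by lia); exact E ] end.

Ltac solve_alpha := repeat match goal with
  | |- context [alpha ?x ?y ?z] =>
    first [ rewrite (@alpha_eq x y z 0); last by lia
          | rewrite (@alpha_eq x y z 1); last by lia
          | rewrite (@alpha_eq x y z 2); last by lia
          | rewrite (@alpha_eq x y z 3); last by lia
          | rewrite (@alpha_eq x y z 4); last by lia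
          | rewrite (@alpha_eq x y z 5); last by lia ]
  | |- context [beta ?x ?y ?z] =>
    first [ rewrite (@beta_eq x y z 0); last by lia
          | rewrite (@beta_eq x y z 1); last by lia
          | rewrite (@beta_eq x y z 2); last by lia
          | rewrite (@beta_eq x y z 3); last by lia
          | rewrite (@beta_eq x y z 4); last by lia
          | rewrite (@beta_eq x y z 5); last by lia ]
  end.

Ltac finish := solve_alpha; apply: key; rewrite ?/g ?/q ?/r ?expr2;
   [ solve_d | solve_d | solve_d | solve_d | solve_d | solve_d | by apply/eqP; vm_compute ].

Theorem lemma4p1 :
  forall (i : 'I_3) (a b c : int),
    Phi i a b c * Phi i (a - 3) (b - 3) (c - 2)
      = Phi i (a - 2) (b - 1) c * Phi i (a - 1) (b - 2) (c - 2)
        + Phi i (a - 1) (b - 1) (c - 1) * Phi i (a - 2) (b - 2) (c - 1)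
    /\
    Psi i a b c * Psi i (a - 3) (b - 3) (c - 2)
      = Psi i (a - 2) (b - 1) c * Psi i (a - 1) (b - 2) (c - 2)
        + Psi i (a - 1) (b - 1) (c - 1) * Psi i (a - 2) (b - 2) (c - 1).
Proof.
move=> i a b c.
have [k [u [Ea Hu]]] : exists k u : int, a = c + 3 * k + u /\ (u = 0 \/ u = 1 \/ u = 2).
  by exists ((a - c) %/ 3)%Z, ((a - c) %% 3)%Z; lia.
have [l [v [Eb Hv]]] : exists l v : int, b = 2 * c + 3 * k + u - 2 * l - v /\ (v = 0 \/ v = 1).
  by exists ((a - b + c) %/ 2)%Z, ((a - b + c) %% 2)%Z; lia.
subst a b.
case: i => [[|[|[|n]]] Hi] //; rewrite /Phi /Psi /=; split;
  rewrite /Phi1 /Phi2 /Phi3 /Psi1 /Psi2 /Psi3 /common;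
  (case: Hu => [->|[->|->]]; case: Hv => [->|->]; finish).
Qed.
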